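(* Let $\langle B,\wedge,{}'\rangle$ be an algebra with $\wedge$ binary and ${}'$ unary satisfying $x\wedge y\approx y\wedge x$, $x\wedge(y\wedge z)\approx(x\wedge y)\wedge z$, $x''\approx x$, and $x'\approx (x\wedge y)'\wedge(x\wedge y')'$. Then for all $x,y\in B$: $(x\wedge y\wedge x)'=(y\wedge x)'$.
   Context: By associativity, $x\wedge y\wedge x$ is unambiguous. *)

From Stdlib Require Import Setoid.

Theorem lemma2p9 (B : Type) (meet : B -> B -> B) (compl : B -> B)
  (Hcomm : forall x y : B, meet x y = meet y x)
  (Hassoc : forall x y z : B, meet x (meet y z) = meet (meet x y) z)
  (Hinv : forall x : B, compl (compl x) = x)
  (Hax : forall x y : B,
     compl x = meet (compl (meet x y)) (compl (meet x (compl y)))) :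
  forall x y : B, compl (meet (meet x y) x) = compl (meet y x).
Proof.
  set (m := meet) in *. set (n := compl) in *.
  assert (shuffle : forall a b c d, m (m a b) (m c d) = m (m c a) (m d b)).
  { intros a b c d.
    assert (mCA : forall a b c, m a (m b c) = m b (m a c)).
    { intros a0 b0 c0. rewrite Hassoc, (Hcomm a0 b0), <- Hassoc. reflexivity. }
    rewrite <- (Hassoc a b (m c d)), (mCA b c d), (mCA a c (m b d)), (Hcomm b d).
    rewrite <- (Hassoc c a (m d b)). reflexivity. }
  assert (L1 : forall x y, m x (n x) = m y (n y)).
  { intros x y.
    transitivity (m (m (n (m (n x) y)) (n (m (n x) (n y))))
                    (m (n (m x y)) (n (m x (n y))))).
    { f_equal. rewrite <- (Hinv x) at 1. apply Hax. apply Hax. }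
    rewrite shuffle.
    rewrite (Hcomm x y), (Hcomm (n x) y), (Hcomm x (n y)), (Hcomm (n x) (n y)).
    rewrite <- (Hax y x). rewrite <- (Hax (n y) x). rewrite Hinv. apply Hcomm. }
  assert (L2 : forall x, n x = m (n (m x (n x))) (n (m x x))).
  { intro x. rewrite (Hcomm (n (m x (n x)))). apply Hax. }
  assert (L3 : forall x y, m x (m y (n y)) = m y (n y)).
  { intros x y. rewrite <- (L1 x y).
    transitivity (m (m x x) (m (n (m x (n x))) (n (m x x)))).
    { rewrite Hassoc. f_equal. apply L2. }
    rewrite Hassoc, (Hcomm (m x x) (n (m x (n x)))), <- Hassoc.
    rewrite (L1 (m x x) x).
    rewrite (Hcomm (n (m x (n x)))). exact (L1 _ x). }
  assert (L4 : forall x y, m x (n (m y (n y))) = x).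
  { intros x y.
    assert (Ed : forall z, n z = m (n (m y (n y))) (n (m z (n (m y (n y)))))).
    { intro z. rewrite (Hax z (m y (n y))). rewrite L3. reflexivity. }
    assert (Edd : m (n (m y (n y))) (n (m y (n y))) = n (m y (n y))).
    { rewrite (Ed (m y (n y))) at 3.
      rewrite (L1 (m y (n y)) y). reflexivity. }
    assert (Ex := Ed (n x)). rewrite Hinv in Ex.
    rewrite Ex at 1. rewrite Hcomm. rewrite Hassoc. rewrite Edd.
    symmetry. exact Ex. }
  assert (L5 : forall x, m x x = x).
  { intro x.
    assert (E : n x = n (m x x)).
    { rewrite (L2 x). rewrite (Hcomm (n (m x (n x)))). apply L4. }
    rewrite <- (Hinv (m x x)), <- E. apply Hinv. }
  intros x y. f_equal.
  rewrite (Hcomm (m x y) x). rewrite Hassoc. rewrite L5. apply Hcomm.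
Qed.
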